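(* Let $P$ be a planar point set of $n$ points in general position and $k=|\mathrm{ch}(P)|$. For every quadrangle tree $\mathcal{Q}$ for $P$, \[ V_{\max}(P)\le|\mathrm{OD}(P,\mathcal{Q})|\cdot 3^n\cdot n^k. \]
   Context: General position: no duplicates, no three collinear. $\mathrm{CH}(P)$ is the convex hull, $\mathrm{ch}(P)$ the points of $P$ on its boundary. $\mathbb{I}_P$ is the set of arrays $I_P$ of length $n$ (indices $1,\dots,n$) storing the points of $P$. A witness list of $I_P$ is $W=(a_i,b_i,c_i)_{i=1}^n\in\mathbb{Z}^{n\times3}$ with $a_i=b_i=c_i=-1$ if $I_P[i]\in\mathrm{ch}(P)$ and otherwise $I_P[i]$ in the interior of triangle $(I_P[a_i],I_P[b_i],I_P[c_i])$. $V(P,W)=\{I_P\in\mathbb{I}_P: W\text{ is a witness list of }I_P\}$ and $V_{\max}(P)=\max_{W\in\mathbb{Z}^{n\times3}}|V(P,W)|$. A rooted convex polygon $(C,p,q)$ is a convex polygon with a chosen edge $pq$; for distinct vertices $r,s$ of $C$, $C^{rs}$ is the piece of $C$ cut by line $rs$ not containing $pq$. A quadrangle tree of $(C,p,q)$ is a binary tree whose nodes store quadrangles spanned by (up to) four vertices of $C$: the root stores $p,q,s,r$ where $rs$ is an edge of $C$ (allowing $p=r$ and/or $q=s$); if $p\ne r$ the root has a child whose subtree is a quadrangle tree of $(C^{pr},p,r)$; if $q\ne s$ the root has a child whose subtree is a quadrangle tree of $(C^{qs},q,s)$. Each node's rooted edge is the chosen edge of its rooted polygon. A quadrangle tree for $P$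 is a quadrangle tree of $(\mathrm{CH}(P),p,q)$ for an edge $pq$ of $\mathrm{CH}(P)$. The population of a node is the set of points of $P$ on or inside its quadrangle except those on the line of its rooted edge; $r(x)$ denotes the node whose population contains $x$. Partial order: $x\prec_{\mathcal{Q}}y$ if $r(x)$ is a strict ancestor of $r(y)$, or $r(x)=r(y)$ and $y$ lies deeper than $x$ inside the halfplane bounded by the rooted-edge line of $r(x)$ containing its quadrangle. A downdraft is a map $\varphi:P-\mathrm{ch}(P)\to P$ with $x\prec_{\mathcal{Q}}\varphi(x)$ for all $x$; an ordered downdraft is a downdraft plus a total order on each fiber $\varphi^{-1}(\{y\})$; $\mathrm{OD}(P,\mathcal{Q})$ is the set of ordered downdrafts. *)

(* Defs.v *)
From HB Require Import structures.
From mathcomp Require Import all_boot all_order all_algebra.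
From mathcomp Require Import fingroup perm boolp.
Set Implicit Arguments. Unset Strict Implicit. Unset Printing Implicit Defensive.
Import Order.TTheory GRing.Theory Num.Theory.
Local Open Scope ring_scope.

Section Geometry.
Variable R : realFieldType.
Local Notation pt := (R * R)%type.

(* twice the signed area of the triangle abc *)
Definition orient (a b c : pt) : R :=
  (b.1 - a.1) * (c.2 - a.2) - (b.2 - a.2) * (c.1 - a.1).

Variable n : nat.
Implicit Types (P : 'I_n -> pt).

Definition general_position P : Prop :=
  injective P /\
  forall i j k : 'I_n, i != j -> j != k -> i != k -> orient (P i) (P j) (P k) != 0.

Definition inP P (x : pt) : Prop := exists i, P i = x.

(* x is a point of P on the boundary of CH(P): a supporting line passes through x *)
Definition on_hull P (x : pt) : Prop :=
  inP P x /\ exists u v : R, (u, v) != (0, 0) /\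
    forall i, u * (P i).1 + v * (P i).2 <= u * x.1 + v * x.2.

Definition hull_count P : nat := #|[set i : 'I_n | `[< on_hull P (P i) >] ]|.

Definition in_open_triangle (a b c x : pt) : Prop :=
  (0 < orient a b x /\ 0 < orient b c x /\ 0 < orient c a x) \/
  (orient a b x < 0 /\ orient b c x < 0 /\ orient c a x < 0).

(* Arrays I_P are encoded by permutations sig : the array stores P (sig i) at
   (1-based) index i+1.  W i is the triple (a_{i+1}, b_{i+1}, c_{i+1});
   its entries are 1-based indices into the array. *)
Definition is_witness P (W : 'I_n -> int * int * int) (sig : {perm 'I_n}) : Prop :=
  forall i : 'I_n,
    (on_hull P (P (sig i)) -> W i = (-1, -1, -1)) /\
    (~ on_hull P (P (sig i)) ->
       exists ia ib ic : 'I_n,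
         W i = ((ia.+1)%:Z, (ib.+1)%:Z, (ic.+1)%:Z) /\
         in_open_triangle (P (sig ia)) (P (sig ib)) (P (sig ic)) (P (sig i))).

Definition Vcard P (W : 'I_n -> int * int * int) : nat :=
  #|[set sig : {perm 'I_n} | `[< is_witness P W sig >] ]|.

(* A node stores p q s r (quadrangle p,q,s,r with rooted edge pq), an optional
   child for side pr (rooted at (p,r)) and an optional child for side qs
   (rooted at (q,s)). *)
Inductive qtree :=
  QNode of pt & pt & pt & pt & option qtree & option qtree.

(* convex polygons are given by their vertex sets (predicates on points) *)
(* rs is an edge of C, oriented so that p,q,s,r is the quadrangle order:
   C lies (weakly) on the same side of the directed lines p->q and s->r. *)
Definition edge_ok (C : pt -> Prop) (p q s r : pt) : Prop :=
  C s /\ C r /\ s <> r /\ ~ (s = p /\ r = q) /\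
  exists sg : R, (sg = 1 \/ sg = -1) /\
    forall x, C x -> 0 <= sg * orient p q x /\ 0 <= sg * orient s r x.

(* C^{ab}: the piece of C cut by line ab not containing the rooted edge,
   o being the endpoint of the rooted edge not on line ab *)
Definition cut (C : pt -> Prop) (a b o : pt) : pt -> Prop :=
  fun x => C x /\ orient a b x * orient a b o <= 0.

Fixpoint qvalid (t : qtree) (C : pt -> Prop) (p q : pt) : Prop :=
  match t with
  | QNode p' q' s r l rr =>
      p' = p /\ q' = q /\ edge_ok C p q s r /\
      match l with
      | None => p = r
      | Some tl => p <> r /\ qvalid tl (cut C p r q) p r
      end /\
      match rr with
      | None => q = s
      | Some tr => q <> s /\ qvalid tr (cut C q s p) q s
      end
  end.

Definition hull_edge P (p q : pt) : Prop :=
  on_hull P p /\ on_hull P q /\ p <> q /\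
  exists sg : R, (sg = 1 \/ sg = -1) /\ forall i, 0 <= sg * orient p q (P i).

Definition qtree_for P (t : qtree) : Prop :=
  exists p q, hull_edge P p q /\ qvalid t (on_hull P) p q.

(* nodes are addressed by paths: false = child of side pr, true = child of side qs *)
Fixpoint subtree (t : qtree) (pi : seq bool) : option qtree :=
  match pi with
  | [::] => Some t
  | b :: pi' =>
      match t with
      | QNode _ _ _ _ l rr =>
          match (if b then rr else l) with
          | Some t' => subtree t' pi'
          | None => None
          end
      end
  end.

Definition in_quad (p q s r x : pt) : Prop :=
  exists a b c d : R, 0 <= a /\ 0 <= b /\ 0 <= c /\ 0 <= d /\ a + b + c + d = 1 /\
    x = (a * p.1 + b * q.1 + c * s.1 + d * r.1, a * p.2 + b * q.2 + c * s.2 + d * r.2).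

Definition pop P (t : qtree) (pi : seq bool) (x : pt) : Prop :=
  exists p q s r l rr, subtree t pi = Some (QNode p q s r l rr) /\
    inP P x /\ in_quad p q s r x /\ orient p q x != 0.

Definition deeper (t : qtree) (pi : seq bool) (x y : pt) : Prop :=
  exists p q s r l rr, subtree t pi = Some (QNode p q s r l rr) /\
    `|orient p q x| < `|orient p q y|.

Definition qprec P (t : qtree) (x y : pt) : Prop :=
  exists pix piy, pop P t pix x /\ pop P t piy y /\
    ((prefix pix piy /\ pix <> piy) \/ (pix = piy /\ deeper t pix x y)).

(* Ordered downdrafts, encoded as (phi, rho): phi is the downdraft on indices
   (normalised to the identity on hull points, where it is not defined), rho is
   the union of the total orders (reflexive) on the fibers of phi. *)
Definition ord_downdraft P (t : qtree)
    (d : {ffun 'I_n -> 'I_n} * {ffun 'I_n * 'I_n -> bool}) : Prop :=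
  let phi := d.1 in let rho := fun i j => d.2 (i, j) in
  let intr := fun i => ~ on_hull P (P i) in
  (forall i, intr i -> qprec P t (P i) (P (phi i))) /\
  (forall i, ~ intr i -> phi i = i) /\
  (forall i j, rho i j -> intr i /\ intr j /\ phi i = phi j) /\
  (forall i j k, intr i -> intr j -> intr k -> phi i = phi j -> phi j = phi k ->
     [/\ rho i i, (rho i j -> rho j i -> i = j),
         (rho i j -> rho j k -> rho i k) & (rho i j \/ rho j i)]).

Definition ODcard P (t : qtree) : nat :=
  #|[set d : {ffun 'I_n -> 'I_n} * {ffun 'I_n * 'I_n -> bool} |
      `[< ord_downdraft P t d >] ]|.

End Geometry.

(* Main.v *)
Require Import Defs.
From HB Require Import structures.
From mathcomp Require Import all_boot all_order all_algebra.
From mathcomp Require Import fingroup perm boolp.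
From mathcomp Require Import ring lra.
Set Implicit Arguments. Unset Strict Implicit. Unset Printing Implicit Defensive.
Import Order.TTheory GRing.Theory Num.Theory.
Local Open Scope ring_scope.


Section Geo.
Variable R : realFieldType.
Variable n : nat.
Variable P : 'I_n -> R * R.
Hypothesis gp : general_position P.
Local Notation pt := (R * R)%type.

Lemma gp3 (a b c : pt) : inP P a -> inP P b -> inP P c ->
  a <> b -> b <> c -> a <> c -> orient a b c != 0.
Proof.
case=> i <- [j <-] [k <-] hij hjk hik; apply: gp.2;
  apply/eqP => e; [apply: hij|apply: hjk|apply: hik]; by rewrite e.
Qed.

Lemma gp_line (a b c : pt) : inP P a -> inP P b -> inP P c -> a <> b ->
  orient a b c = 0 -> c = a \/ c = b.
Proof.
move=> ha hb hc hab ho.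
case: (boolP (c == a)) => [/eqP|/eqP hca]; first by left.
case: (boolP (c == b)) => [/eqP|/eqP hcb]; first by right.
have := gp3 ha hb hc hab (fun e => hcb (esym e)) (fun e => hca (esym e)).
by rewrite ho eqxx.
Qed.

Definition conv (C : pt -> Prop) (z : pt) : Prop :=
  exists l : 'I_n -> R, (forall i, 0 <= l i) /\ (forall i, l i != 0 -> C (P i)) /\
    \sum_i l i = 1 /\ z.1 = \sum_i l i * (P i).1 /\ z.2 = \sum_i l i * (P i).2.

Lemma aff_sum (l : 'I_n -> R) (z : pt) a b c :
  \sum_i l i = 1 -> z.1 = \sum_i l i * (P i).1 -> z.2 = \sum_i l i * (P i).2 ->
  a * z.1 + b * z.2 + c = \sum_i l i * (a * (P i).1 + b * (P i).2 + c).
Proof.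
move=> h1 h2 h3.
rewrite h2 h3; transitivity (a * (\sum_i l i * (P i).1) + b * (\sum_i l i * (P i).2) + c * \sum_i l i); first by rewrite h1 mulr1.
rewrite !mulr_sumr -!big_split; apply: eq_bigr => i _ /=; ring.
Qed.

Lemma conv_ge0 C z a b c : conv C z ->
  (forall x, C x -> 0 <= a * x.1 + b * x.2 + c) -> 0 <= a * z.1 + b * z.2 + c.
Proof.
case=> l [l0 [lC [l1 [z1 z2]]]] hC.
rewrite (aff_sum a b c l1 z1 z2); apply: sumr_ge0 => i _.
case: (boolP (l i == 0)) => [/eqP->|/lC Ci]; first by rewrite mul0r.
by apply: mulr_ge0 => //; apply: hC.
Qed.

Lemma orient_aff k (p q x : pt) : k * orient p q x =
  (k * (- (q.2 - p.2))) * x.1 + (k * (q.1 - p.1)) * x.2 +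
  k * ((q.2 - p.2) * p.1 - (q.1 - p.1) * p.2).
Proof. rewrite /orient; ring. Qed.

Lemma conv_orient C z k p q : conv C z ->
  (forall x, C x -> 0 <= k * orient p q x) -> 0 <= k * orient p q z.
Proof.
move=> hz hC; rewrite orient_aff; apply: (conv_ge0 hz) => x Cx.
by rewrite -orient_aff; apply: hC.
Qed.


Lemma pt_eq (a b : pt) : a.1 = b.1 -> a.2 = b.2 -> a = b.
Proof. by case: a b => [? ?] [? ?] /= -> ->. Qed.

Lemma sum2 (l F : 'I_n -> R) a b : a != b ->
  (forall i, i != a -> i != b -> l i = 0) ->
  \sum_i l i * F i = l a * F a + l b * F b.
Proof.
move=> ab h; rewrite (bigD1 a) //= (bigD1 b) /=; last by rewrite eq_sym.
rewrite big1 ?addr0 // => i /andP [ia ib]; by rewrite h ?mul0r.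
Qed.

Lemma sum_one (l : 'I_n -> R) : \sum_i l i = \sum_i l i * 1.
Proof. by apply: eq_bigr => i _; rewrite mulr1. Qed.

Lemma line_of_level (p q x : pt) u v : (u, v) != (0, 0) ->
  u * q.1 + v * q.2 = u * p.1 + v * p.2 ->
  u * x.1 + v * x.2 = u * p.1 + v * p.2 -> orient p q x = 0.
Proof.
move=> uv A B.
have h1 : u * orient p q x = 0.
  have -> : u * orient p q x = ((u * q.1 + v * q.2) - (u * p.1 + v * p.2)) * (x.2 - p.2)
     - (q.2 - p.2) * ((u * x.1 + v * x.2) - (u * p.1 + v * p.2)) by rewrite /orient; ring.
  by rewrite A B !subrr mul0r mulr0 subrr.
have h2 : v * orient p q x = 0.
  have -> : v * orient p q x = (q.1 - p.1) * ((u * x.1 + v * x.2) - (u * p.1 + v * p.2))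
     - ((u * q.1 + v * q.2) - (u * p.1 + v * p.2)) * (x.1 - p.1) by rewrite /orient; ring.
  by rewrite A B !subrr mul0r mulr0 subrr.
apply/eqP; apply: contraT => ho.
move: h1 h2 => /eqP; rewrite mulf_eq0 (negbTE ho) orbF => /eqP u0.
move/eqP; rewrite mulf_eq0 (negbTE ho) orbF => /eqP v0.
by move: uv; rewrite u0 v0 eqxx.
Qed.

Lemma Eaux (p q w : pt) (t : R) : inP P p -> on_hull P q -> p <> q ->
  conv (inP P) w -> w.1 = p.1 + t * (q.1 - p.1) ->
  w.2 = p.2 + t * (q.2 - p.2) -> 1 < t -> False.
Proof.
move=> [ip ep] [[iq eq] [u [v [uv hu]]]] pq hw w1 w2 t1.
have hw' := hw; case: hw' => l [l0 [_ [l1 [z1 z2]]]].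
pose g := fun x : pt => u * x.1 + v * x.2.
have gw : g w <= g q.
  have := conv_ge0 (a := - u) (b := - v) (c := g q) hw.
  rewrite /g => H; have : 0 <= - u * w.1 + - v * w.2 + (u * q.1 + v * q.2).
    by apply: H => x [i <-]; have := hu i; lra.
  lra.
have gpq : g p <= g q by rewrite /g -ep; apply: hu.
have gwp : g w = g p + t * (g q - g p) by rewrite /g w1 w2; ring.
have e1 : g p = g q.
  have hA : (t - 1) * (g q - g p) <= 0 by rewrite mulrBl mul1r; lra.
  have hB : 0 <= g q - g p by lra.
  case: (boolP (0 < g q - g p)) => hC.
    have : 0 < (t - 1) * (g q - g p) by apply: mulr_gt0; lra.
    lra.
  rewrite -leNgt in hC; lra.
have e2 : g w = g q by rewrite gwp e1 subrr mulr0 addr0.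
have supp : forall i, l i != 0 -> g (P i) = g q.
  move=> i li.
  have S := aff_sum (- u) (- v) (g q) l1 z1 z2.
  have S0 : \sum_i l i * (- u * (P i).1 + - v * (P i).2 + g q) = 0.
    by rewrite -S; move: e2; rewrite /g; lra.
  have T0 : forall i, true -> 0 <= l i * (- u * (P i).1 + - v * (P i).2 + g q).
    by move=> k _; apply: mulr_ge0 => //; have := hu k; rewrite /g; lra.
  have := psumr_eq0P T0 S0 (i := i) isT.
  move/eqP; rewrite mulf_eq0 (negbTE li) /= => /eqP; rewrite /g; lra.
have online : forall i, l i != 0 -> i = ip \/ i = iq.
  move=> i li.
  have ho : orient p q (P i) = 0.
    apply: (line_of_level uv); first by move: e1; rewrite /g.
    by have := supp i li; move: e1; rewrite /g; lra.
  case: (gp_line (ex_intro _ ip ep) (ex_intro _ iq eq) (ex_intro _ i erefl) pq ho)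
    => [e|e]; [left|right]; apply: gp.1; by rewrite e.
have ipq : ip != iq by apply/eqP => e; apply: pq; rewrite -ep -eq e.
have l0' : forall i, i != ip -> i != iq -> l i = 0.
  move=> i hi1 hi2; apply/eqP; apply: contraT => li.
  by case: (online i li) => e; [move: hi1|move: hi2]; rewrite e eqxx.
move: l1 z1 z2; rewrite sum_one !(sum2 _ ipq l0') ep eq mulr1 mulr1 => l1 z1 z2.
have lq1 : l iq <= 1 by have := l0 ip; lra.
have d1 : (t - l iq) * (q.1 - p.1) = 0.
  have : l ip = 1 - l iq by lra.
  move=> e; move: w1; rewrite z1 e => w1; lra.
have d2 : (t - l iq) * (q.2 - p.2) = 0.
  have : l ip = 1 - l iq by lra.
  move=> e; move: w2; rewrite z2 e => w2; lra.
have tl : t - l iq != 0 by apply/eqP; lra.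
apply: pq; apply: pt_eq.
  by move/eqP: d1; rewrite mulf_eq0 (negbTE tl) subr_eq0 => /eqP.
by move/eqP: d2; rewrite mulf_eq0 (negbTE tl) subr_eq0 => /eqP.
Qed.


Lemma sq_pos (a b : R) : (a != 0) || (b != 0) -> 0 < a * a + b * b.
Proof.
move=> h; have ha := sqr_ge0 a; have hb := sqr_ge0 b.
case/orP: h => h.
  have : 0 < a * a by rewrite -expr2 exprn_even_gt0 //.
  lra.
have : 0 < b * b by rewrite -expr2 exprn_even_gt0 //.
lra.
Qed.

Lemma neq_pt (p q : pt) : p <> q -> (q.1 - p.1 != 0) || (q.2 - p.2 != 0).
Proof.
move=> pq; apply: contraT; rewrite negb_or !negbK !subr_eq0 => /andP [/eqP h1 /eqP h2].
by case: pq; apply: pt_eq.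
Qed.

Lemma E_seg (p q w : pt) : on_hull P p -> on_hull P q -> p <> q ->
  conv (inP P) w -> orient p q w = 0 ->
  exists a, 0 <= a /\ a <= 1 /\ w.1 = a * p.1 + (1 - a) * q.1 /\
                              w.2 = a * p.2 + (1 - a) * q.2.
Proof.
move=> hp hq pq hw ho.
set d1 := q.1 - p.1; set d2 := q.2 - p.2.
have N0 : 0 < d1 * d1 + d2 * d2 by apply: sq_pos; apply: neq_pt.
have Nn : d1 * d1 + d2 * d2 != 0 by rewrite gt_eqF.
set t := ((w.1 - p.1) * d1 + (w.2 - p.2) * d2) / (d1 * d1 + d2 * d2).
have e1 : w.1 = p.1 + t * d1.
  have : w.1 - p.1 - t * d1 = - d2 * orient p q w / (d1 * d1 + d2 * d2).
    rewrite /t /orient -/d1 -/d2; field; done.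
  rewrite ho mulr0 mul0r => /eqP; rewrite subr_eq0 subr_eq => /eqP ->; ring.
have e2 : w.2 = p.2 + t * d2.
  have : w.2 - p.2 - t * d2 = d1 * orient p q w / (d1 * d1 + d2 * d2).
    rewrite /t /orient -/d1 -/d2; field; done.
  rewrite ho mulr0 mul0r => /eqP; rewrite subr_eq0 subr_eq => /eqP ->; ring.
case: (boolP (1 < t)) => t1.
  by case: (Eaux hp.1 hq pq hw e1 e2 t1).
case: (boolP (t < 0)) => t0.
  have q1 : w.1 = q.1 + (1 - t) * (p.1 - q.1) by rewrite e1 /d1; ring.
  have q2 : w.2 = q.2 + (1 - t) * (p.2 - q.2) by rewrite e2 /d2; ring.
  have t1' : 1 < 1 - t by lra.
  by case: (Eaux hq.1 hp (fun e => pq (esym e)) hw q1 q2 t1').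
exists (1 - t); rewrite -leNgt in t1; rewrite -leNgt in t0.
split; first lra. split; first lra.
by split; [rewrite e1 /d1|rewrite e2 /d2]; ring.
Qed.


Definition comb (m : R) (a b : pt) : pt := (m * a.1 + (1 - m) * b.1, m * a.2 + (1 - m) * b.2).

Lemma orient_comb p q m a b :
  orient p q (comb m a b) = m * orient p q a + (1 - m) * orient p q b.
Proof. rewrite /orient /comb /=; ring. Qed.

Lemma comb_comb m l a b : comb m a (comb l a b) = comb (m + (1 - m) * l) a b.
Proof. rewrite /comb /=; apply: pt_eq => /=; ring. Qed.

Lemma conv_mono (C C' : pt -> Prop) z : (forall x, C x -> C' x) -> conv C z -> conv C' z.
Proof. move=> h [l [l0 [lC rest]]]; exists l; split => //; split => // i /lC; exact: h. Qed.

Lemma conv_pt (C : pt -> Prop) i : C (P i) -> conv C (P i).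
Proof.
move=> Ci; exists (fun j => (j == i)%:R); split; first by move=> j /=; case: (j == i).
split; first by move=> j /=; have [->|_] := eqVneq j i => //=; rewrite eqxx.
rewrite (bigD1 i) //= eqxx big1 ?addr0 //; last by move=> j /negbTE ->.
split => //; rewrite (bigD1 i) //= eqxx mul1r big1 ?addr0 //;
  try (by move=> j /negbTE ->; rewrite mul0r); split => //.
rewrite (bigD1 i) //= eqxx mul1r big1 ?addr0 //; by move=> j /negbTE ->; rewrite mul0r.
Qed.

Lemma conv_comb2 (C : pt -> Prop) m a b : conv C a -> conv C b -> 0 <= m -> m <= 1 ->
  conv C (comb m a b).
Proof.
move=> [la [la0 [laC [la1 [a1 a2]]]]] [lb [lb0 [lbC [lb1 [b1 b2]]]]] m0 m1.
exists (fun i => m * la i + (1 - m) * lb i); split.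
  by move=> i; apply: addr_ge0; apply: mulr_ge0 => //; lra.
split.
  move=> i; case: (boolP (la i == 0)) => [/eqP ha|/laC //].
  case: (boolP (lb i == 0)) => [/eqP hb|/lbC //].
  by rewrite ha hb !mulr0 addr0 eqxx.
rewrite big_split /= -!mulr_sumr la1 lb1 !mulr1; split; first ring.
rewrite /comb /= a1 a2 b1 b2 !mulr_sumr -!big_split /=.
by split; apply: eq_bigr => i _; ring.
Qed.

Lemma sum_ge_term (F : 'I_n -> R) i0 : (forall i, 0 <= F i) -> F i0 <= \sum_i F i.
Proof.
move=> h; rewrite (bigD1 i0) //= lerDl; apply: sumr_ge0 => i _; exact: h.
Qed.


Definition wpt (l : 'I_n -> R) : pt := (\sum_i l i * (P i).1, \sum_i l i * (P i).2).

Lemma conv_f (l : 'I_n -> R) z k p q : \sum_i l i = 1 -> z.1 = \sum_i l i * (P i).1 ->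
  z.2 = \sum_i l i * (P i).2 ->
  k * orient p q z = \sum_i l i * (k * orient p q (P i)).
Proof.
move=> l1 z1 z2; rewrite orient_aff (aff_sum _ _ _ l1 z1 z2).
by apply: eq_bigr => i _; rewrite -orient_aff.
Qed.

Lemma conv_wpt (C : pt -> Prop) (l : 'I_n -> R) : (forall i, 0 <= l i) ->
  (forall i, l i != 0 -> C (P i)) -> \sum_i l i = 1 -> conv C (wpt l).
Proof. by move=> l0 lC l1; exists l. Qed.

Lemma H2 (C : pt -> Prop) p r z k :
  (forall x, C x -> on_hull P x) -> C p -> C r -> p <> r -> k != 0 ->
  conv C z -> 0 <= k * orient p r z ->
  conv (fun x => C x /\ 0 <= k * orient p r x) z.
Proof.
move=> CH Cp Cr pr k0 hz fz.
have hz' := hz; case: hz' => l [l0 [lC [l1 [z1 z2]]]].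
pose f := fun x : pt => k * orient p r x.
pose A := fun i => 0 <= f (P i).
pose lA := fun i => if A i then l i else 0.
pose lB := fun i => if A i then 0 else l i.
have lAB : forall i, l i = lA i + lB i.
  by move=> i; rewrite /lA /lB; case: (A i); rewrite ?addr0 ?add0r.
have lA0 : forall i, 0 <= lA i by move=> i; rewrite /lA; case: (A i).
have lB0 : forall i, 0 <= lB i by move=> i; rewrite /lB; case: (A i).
case: (pselect (forall i, ~~ A i -> l i = 0)) => [allA|notall].
  exists l; split=> //; split=> //.
  move=> i li; split; first exact: lC.
  case: (boolP (A i)) => // nA; by rewrite (allA i nA) eqxx in li.
have [i0 [nA0 li0]] : exists i0, ~~ A i0 /\ l i0 != 0.
  move: notall => /existsNP [i0 /not_implyP [h1 h2]]; exists i0; split => //.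
  by apply/eqP.
have fi0 : f (P i0) < 0 by rewrite ltNge.
pose FA := \sum_i lA i * f (P i).
pose FB := \sum_i lB i * f (P i).
pose al := \sum_i lA i.
pose be := \sum_i lB i.
have hfz : f z = FA + FB.
  rewrite /f (conv_f _ _ _ l1 z1 z2) /FA /FB -big_split /=.
  by apply: eq_bigr => i _; rewrite lAB mulrDl.
have hab : al + be = 1 by rewrite /al /be -big_split /= -l1; apply: eq_bigr => i _; rewrite lAB.
have FAge : 0 <= FA.
  apply: sumr_ge0 => i _; rewrite /lA; case: (boolP (A i)) => Ai; last by rewrite mul0r.
  by apply: mulr_ge0.
have lBi0 : lB i0 = l i0 by rewrite /lB (negbTE nA0).
have li0p : 0 < l i0 by rewrite lt_def li0 l0.
have FBlt : FB < 0.
  have t0 : lB i0 * f (P i0) < 0 by rewrite lBi0 pmulr_rlt0.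
  have : - (lB i0 * f (P i0)) <= \sum_i - (lB i * f (P i)).
    apply: (sum_ge_term (F := fun i => - (lB i * f (P i)))) => i.
    rewrite /lB; case: (boolP (A i)) => Ai; first by rewrite mul0r oppr0.
    rewrite oppr_ge0; apply: mulr_ge0_le0 => //; apply: ltW; by rewrite ltNge.
  rewrite sumrN /FB; lra.
have FApos : 0 < FA by move: fz; rewrite -/(f z) hfz; lra.
have al0 : al != 0.
  apply/eqP => a0.
  have hz0 : forall i, lA i = 0.
    by move=> i; apply: (psumr_eq0P (P := xpredT) (fun i _ => lA0 i) a0).
  move: FApos; rewrite /FA big1 ?ltxx // => i _; by rewrite hz0 mul0r.
have be0 : 0 < be.
  apply: (lt_le_trans _ (sum_ge_term i0 lB0)); by rewrite lBi0.
have alp : 0 < al by rewrite lt_def al0 /al sumr_ge0.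
pose a := wpt (fun i => lA i / al).
pose b := wpt (fun i => lB i / be).
have ha : conv (fun x => C x /\ 0 <= k * orient p r x) a.
  apply: conv_wpt.
  - by move=> i; apply: divr_ge0 => //; apply: ltW.
  - move=> i; rewrite /lA; case: (boolP (A i)) => Ai; last by rewrite mul0r eqxx.
    rewrite mulf_eq0 negb_or => /andP [li _]; split; [exact: lC|exact: Ai].
  - by rewrite -mulr_suml divff.
have hb : conv C b.
  apply: conv_wpt.
  - by move=> i; apply: divr_ge0 => //; apply: ltW.
  - move=> i; rewrite /lB; case: (boolP (A i)) => Ai; first by rewrite mul0r eqxx.
    rewrite mulf_eq0 negb_or => /andP [li _]; exact: lC.
  - by rewrite -mulr_suml divff // gt_eqF.
have fa : f a = FA / al.
  rewrite /f (conv_f (l := fun i => lA i / al)) //; last by rewrite -mulr_suml divff.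
  by rewrite /FA mulr_suml; apply: eq_bigr => i _; rewrite mulrAC.
have fb : f b = FB / be.
  rewrite /f (conv_f (l := fun i => lB i / be)) //; last by rewrite -mulr_suml divff // gt_eqF.
  by rewrite /FB mulr_suml; apply: eq_bigr => i _; rewrite mulrAC.
have zab : z = comb al a b.
  apply: pt_eq; rewrite /comb /a /b /wpt /= -[1 - al]/(1 - al) (_ : 1 - al = be); try lra.
    rewrite !mulr_sumr -big_split z1 /=; apply: eq_bigr => i _.
    by rewrite lAB; field; rewrite al0 gt_eqF.
  rewrite !mulr_sumr -big_split z2 /=; apply: eq_bigr => i _.
  by rewrite lAB; field; rewrite al0 gt_eqF.
have fap : 0 < f a by rewrite fa divr_gt0.
have fbn : f b < 0 by rewrite fb pmulr_llt0 // invr_gt0.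
pose la := - f b / (f a - f b).
have la0 : 0 <= la by rewrite /la divr_ge0 //; lra.
have la1 : la <= 1 by rewrite /la ler_pdivrMr; lra.
pose w := comb la a b.
have hw : conv C w by apply: conv_comb2 => //; apply: (conv_mono _ ha) => x [].

have fw : f w = 0.
  have -> : f w = la * f a + (1 - la) * f b by rewrite /f /w orient_comb; ring.
  rewrite /la; field; apply/eqP; lra.
have ow : orient p r w = 0.
  by move/eqP: fw; rewrite /f mulf_eq0 (negbTE k0) => /eqP.
have hwP : conv (inP P) w by apply: (conv_mono _ hw) => x /CH [].
have [th [th0 [th1 [w1 w2]]]] := E_seg (CH _ Cp) (CH _ Cr) pr hwP ow.
have hw2 : conv (fun x => C x /\ 0 <= k * orient p r x) w.
  have -> : w = comb th p r by apply: pt_eq.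
  have [[ip ep] _] := CH _ Cp; have [[ir er] _] := CH _ Cr.
  apply: conv_comb2 => //.
    by rewrite -ep; apply: conv_pt; rewrite ep /orient; split => //; rewrite !subrr; lra.
  by rewrite -er; apply: conv_pt; rewrite er /orient; split => //; lra.
pose mu := f z / f a.
have fzab : f z = al * f a + (1 - al) * f b.
  by rewrite zab /f orient_comb; ring.
have mu0 : 0 <= mu by rewrite /mu divr_ge0 //; apply: ltW.
have mu1 : mu <= 1.
  rewrite /mu ler_pdivrMr // mul1r fzab.
  have : 0 <= (1 - al) by lra.
  have : (1 - al) * f b <= 0 by apply: mulr_ge0_le0; lra.
  have : al * f a <= 1 * f a by apply: ler_wpM2r; lra.
  lra.
have -> : z = comb mu a w.
  rewrite /w comb_comb zab; congr comb.
  rewrite /mu /la fzab; field; apply/andP; split; apply/eqP; lra.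
exact: conv_comb2.
Qed.


Record Good (C : pt -> Prop) (p q : pt) (k : R) : Prop := MkGood {
  gCp : C p; gCq : C q; gpq : p <> q; gk : k != 0;
  giff : forall x, C x <-> on_hull P x /\ 0 <= k * orient p q x;
  gconv : forall z, inP P z -> 0 <= k * orient p q z -> conv C z }.

Lemma orient_swap (p q x : pt) : orient q p x = - orient p q x.
Proof. rewrite /orient; ring. Qed.

Lemma Good_swap (C : pt -> Prop) (p q : pt) k : Good C p q k -> Good C q p (- k).
Proof.
case=> Cp Cq pq k0 hC hz; constructor => //.
- by move=> e; apply: pq.
- by rewrite oppr_eq0.
- by move=> x; rewrite (orient_swap p q) mulrNN.
- by move=> z; rewrite (orient_swap p q) mulrNN; apply: hz.
Qed.

Lemma edge_ok_swap (C : pt -> Prop) (p q s r : pt) : edge_ok C p q s r -> edge_ok C q p r s.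
Proof.
case=> Cs [Cr [sr [nsp [sg [hsg hC]]]]]; split => //; split => //; split.
  by move=> e; apply: sr.
split; first by case=> e1 e2; apply: nsp.
exists (- sg); split; first by case: hsg => ->; [right|left]; rewrite ?opprK.
move=> x /hC [h1 h2]; rewrite (orient_swap p q) (orient_swap s r) !mulrNN; split => //.
Qed.

Lemma orient_cyc (a b c : pt) : orient a b c = orient b c a.
Proof. rewrite /orient; ring. Qed.

Lemma orient_aa (a b : pt) : orient a b a = 0.
Proof. rewrite /orient; ring. Qed.
Lemma orient_ab (a b : pt) : orient a b b = 0.
Proof. rewrite /orient; ring. Qed.

Lemma orient_comb_line m (a b : pt) : orient (comb m a b) b a = 0.
Proof. rewrite /orient /comb /=; ring. Qed.

Lemma sg_cases (sg x : R) : sg = 1 \/ sg = -1 -> 0 <= sg * x -> x != 0 -> 0 < sg * x.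
Proof. move=> hs h x0; rewrite lt_def h andbT mulf_eq0 negb_or x0 andbT; by case: hs => ->; rewrite ?oppr_eq0 oner_eq0. Qed.

Lemma Mono (C : pt -> Prop) (p q : pt) k (r : pt) : Good C p q k -> C r -> r <> p -> r <> q ->
  forall z, inP P z -> 0 <= - orient p r q * orient p r z -> 0 <= k * orient p q z.
Proof.
case=> Cp Cq pq k0 hC _ Cr rp rq z hz hM.
have [Hp _] := (hC p).1 Cp; have [Hq _] := (hC q).1 Cq; have [Hr dr0] := (hC r).1 Cr.
pose d := fun x => k * orient p q x.
have drn : d r != 0.
  rewrite /d mulf_eq0 negb_or k0 /=; apply: gp3;
    [exact: Hp.1|exact: Hq.1|exact: Hr.1|exact: pq|by move=> e; apply: rq|by move=> e; apply: rp].
have drp : 0 < d r by rewrite lt_def drn dr0.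
rewrite leNgt; apply/negP => dz0.
have dz : d z < 0 := dz0.
pose la := d r / (d r - d z).
have la0 : 0 <= la by rewrite /la divr_ge0 //; lra.
have la1 : la <= 1 by rewrite /la ler_pdivrMr; lra.
pose w := comb la z r.
have dw : d w = 0.
  have -> : d w = la * d z + (1 - la) * d r by rewrite /d /w orient_comb; ring.
  rewrite /la; field; apply/eqP; lra.
have ow : orient p q w = 0 by move/eqP: dw; rewrite /d mulf_eq0 (negbTE k0) => /eqP.
have hwP : conv (inP P) w.
  case: hz => iz ez; case: Hr => [[ir er] _].
  apply: conv_comb2 => //; [rewrite -ez|rewrite -er]; apply: conv_pt; by [exists iz|exists ir].
have [th [th0 [th1 [w1 w2]]]] := E_seg Hp Hq pq hwP ow.
have wpq : w = comb th p q by apply: pt_eq.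
pose dM := fun x => - orient p r q * orient p r x.
have dMw : 0 <= dM w.
  have -> : dM w = la * dM z + (1 - la) * dM r by rewrite /dM /w orient_comb; ring.
  rewrite /dM orient_ab mulr0 mulr0 addr0; by apply: mulr_ge0.
have prq : orient p r q != 0.
  apply: gp3; [exact: Hp.1|exact: Hr.1|exact: Hq.1|by move=> e; apply: rp|by move=> e; apply: rq|exact: pq].
have th1' : th = 1.
  move: dMw; rewrite wpq /dM orient_comb orient_aa mulr0 add0r.
  have : 0 < orient p r q * orient p r q.
    by rewrite -expr2 exprn_even_gt0.
  move=> pos h.
  have : (1 - th) * (orient p r q * orient p r q) <= 0.
    have e : (1 - th) * (orient p r q * orient p r q) = - (- orient p r q * ((1 - th) * orient p r q)) by ring.
    by rewrite e oppr_le0.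
  case: (boolP (0 < 1 - th)) => h1.
    have : 0 < (1 - th) * (orient p r q * orient p r q) by apply: mulr_gt0.
    lra.
  rewrite -leNgt in h1; lra.
have wp : w = p by rewrite wpq th1' /comb; apply: pt_eq => /=; ring.
have : orient p r z = 0 by rewrite -wp orient_comb_line.
move=> ol; case: (gp_line Hp.1 Hr.1 hz (fun e => rp (esym e)) ol) => e.
  by move: dz; rewrite e /d orient_aa mulr0 ltxx.
by move: dz; rewrite e; lra.
Qed.


Lemma cut_iff (C : pt -> Prop) p r q x :
  cut C p r q x <-> C x /\ 0 <= - orient p r q * orient p r x.
Proof. by rewrite /cut mulNr oppr_ge0 mulrC. Qed.

Lemma ChildGood (C : pt -> Prop) (p q : pt) k (s r : pt) :
  Good C p q k -> edge_ok C p q s r -> p <> r ->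
  Good (cut C p r q) p r (- orient p r q).
Proof.
move=> G E pr; have G' := G; case: G' => Cp Cq pq k0 hC hz.
case: E => Cs [Cr [sr [nsp [sg [hsg hE]]]]].
have CH : forall x, C x -> on_hull P x by move=> x /(hC x).1 [].
have Hp := CH _ Cp; have Hq := CH _ Cq; have Hr := CH _ Cr; have Hs := CH _ Cs.
have rq : r <> q.
  move=> e; have sp : s <> p by move=> e'; apply: nsp.
  have h1 := (hE p Cp).2; have h2 := (hE s Cs).1.
  have ee : orient s r p = - orient p q s by rewrite e /orient; ring.
  rewrite ee mulrN oppr_ge0 in h1.
  have h3 : sg * orient p q s = 0 by apply/eqP; rewrite eq_le h1 h2.
  have : orient p q s != 0.
    apply: gp3; [exact: Hp.1|exact: Hq.1|exact: Hs.1|exact: pq| |].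
      by move=> e'; apply: sr; rewrite -e'.
    by move=> e'; apply: sp.
  move/eqP: h3; rewrite mulf_eq0 => /orP [/eqP s0|/eqP ->]; last by rewrite eqxx.
  by case: hsg => h; move: s0; rewrite h => /eqP; rewrite ?oppr_eq0 oner_eq0.
have prq : orient p r q != 0.
  apply: gp3; [exact: Hp.1|exact: Hr.1|exact: Hq.1|exact: pr|exact: rq|exact: pq].
constructor.
- by apply/cut_iff; split => //; rewrite orient_aa mulr0.
- by apply/cut_iff; split => //; rewrite orient_ab mulr0.
- exact: pr.
- by rewrite oppr_eq0.
- move=> x; rewrite cut_iff; split.
    by case=> Cx hx; split => //; exact: CH.
  case=> Hx hx; split => //; apply/(hC x).2; split => //.
  exact: (Mono G Cr (fun e => pr (esym e)) rq Hx.1 hx).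
- move=> z iz hx.
  have dz := Mono G Cr (fun e => pr (esym e)) rq iz hx.
  have cz := hz z iz dz.
  have k0' : - orient p r q != 0 by rewrite oppr_eq0.
  have := H2 CH Cp Cr pr k0' cz hx.
  by apply: conv_mono => x [Cx hx']; apply/cut_iff.
Qed.

End Geo.


Section Geo2.
Variable R : realFieldType.
Variable n : nat.
Variable P : 'I_n -> R * R.
Hypothesis gp : general_position P.
Local Notation pt := (R * R)%type.

Ltac neqt := let e := fresh "e" in move=> e; subst;
  match goal with H : ?a <> ?a |- _ => exact: (H erefl) end.

Definition tri (a b c z : pt) : Prop := exists al be ga : R,
  [/\ 0 <= al, 0 <= be, 0 <= ga, al + be + ga = 1 &
     z = (al * a.1 + be * b.1 + ga * c.1, al * a.2 + be * b.2 + ga * c.2)].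

Lemma sg_sq (sg : R) : sg = 1 \/ sg = -1 -> sg * sg = 1.
Proof. by case=> ->; rewrite ?mulrNN mulr1. Qed.

Lemma tri_bary (a b c z : pt) sg : sg = 1 \/ sg = -1 -> 0 < sg * orient a b c ->
  0 <= sg * orient a b z -> 0 <= sg * orient b c z -> 0 <= sg * orient c a z ->
  tri a b c z.
Proof.
move=> hs hT h1 h2 h3.
have s2 := sg_sq hs.
have T0 : orient a b c != 0 by apply/eqP => e; move: hT; rewrite e mulr0 ltxx.
have sT : sg * orient a b c != 0 by rewrite gt_eqF.
have dv : forall x, x / orient a b c = (sg * x) / (sg * orient a b c).
  by move=> x; field; rewrite T0 /=; apply/eqP => e; move: s2; rewrite e mul0r => /eqP; rewrite eq_sym oner_eq0.
exists (orient b c z / orient a b c), (orient c a z / orient a b c), (orient a b z / orient a b c).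
split; try (rewrite dv; apply: divr_ge0 => //; exact: ltW).
  rewrite -!mulrDl (_ : orient b c z + orient c a z + orient a b z = orient a b c) ?divff //.
  rewrite /orient; ring.
apply: pt_eq => /=; rewrite /orient; field; exact: T0.
Qed.

Definition qq (p q s r : pt) := in_quad p q s r.

Lemma quad_pqs (p q s r z : pt) : tri p q s z -> in_quad p q s r z.
Proof.
case=> al [be [ga [h1 h2 h3 h4 ->]]]; exists al, be, ga, 0; do 5 (split; first by lra).
by congr pair; ring.
Qed.

Lemma quad_pqr (p q s r z : pt) : tri p q r z -> in_quad p q s r z.
Proof.
case=> al [be [ga [h1 h2 h3 h4 ->]]]; exists al, be, 0, ga; do 5 (split; first by lra).
by congr pair; ring.
Qed.

Lemma quad_psr (p q s r z : pt) : tri p s r z -> in_quad p q s r z.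
Proof.
case=> al [be [ga [h1 h2 h3 h4 ->]]]; exists al, 0, be, ga; do 5 (split; first by lra).
by congr pair; ring.
Qed.

Lemma quad_r (p q s r : pt) : in_quad p q s r r.
Proof.
exists 0, 0, 0, 1; do 5 (split; first by lra).
by case: r => r1 r2; congr pair => /=; ring.
Qed.

Lemma quad_s (p q s r : pt) : in_quad p q s r s.
Proof.
exists 0, 0, 1, 0; do 5 (split; first by lra).
by case: s => r1 r2; congr pair => /=; ring.
Qed.


Lemma edge_rq (C : pt -> Prop) (p q : pt) k (s r : pt) :
  Good P C p q k -> edge_ok C p q s r -> r <> q.
Proof.
move=> G E; case: G => Cp Cq pq k0 hC hz.
case: E => Cs [Cr [sr [nsp [sg [hsg hE]]]]].
have CH : forall x, C x -> on_hull P x by move=> x /(hC x).1 [].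
have Hp := CH _ Cp; have Hq := CH _ Cq; have Hr := CH _ Cr; have Hs := CH _ Cs.
move=> e; have sp : s <> p by move=> e'; apply: nsp.
have h1 := (hE p Cp).2; have h2 := (hE s Cs).1.
have ee : orient s r p = - orient p q s by rewrite e /orient; ring.
rewrite ee mulrN oppr_ge0 in h1.
have h3 : sg * orient p q s = 0 by apply/eqP; rewrite eq_le h1 h2.
have : orient p q s != 0.
  apply: (gp3 gp); [exact: Hp.1|exact: Hq.1|exact: Hs.1|exact: pq| |].
    by move=> e'; apply: sr; rewrite -e'.
  by move=> e'; apply: sp.
move/eqP: h3; rewrite mulf_eq0 => /orP [/eqP s0|/eqP ->]; last by rewrite eqxx.
by case: hsg => h; move: s0; rewrite h => /eqP; rewrite ?oppr_eq0 oner_eq0.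
Qed.


Fixpoint qsize (t : qtree R) : nat :=
  match t with
  | QNode _ _ _ _ l rr =>
      ((if l is Some t1 then qsize t1 else 0) + (if rr is Some t2 then qsize t2 else 0)).+1
  end.

Lemma pop_nil (p q s r : pt) l rr z :
  inP P z -> in_quad p q s r z -> orient p q z != 0 ->
  pop P (QNode p q s r l rr) [::] z.
Proof. by move=> h1 h2 h3; exists p, q, s, r, l, rr. Qed.

Lemma pop_l (p q s r : pt) tl rr pi z :
  pop P tl pi z -> pop P (QNode p q s r (Some tl) rr) (false :: pi) z.
Proof. by []. Qed.

Lemma pop_r (p q s r : pt) l tr pi z :
  pop P tr pi z -> pop P (QNode p q s r l (Some tr)) (true :: pi) z.
Proof. by []. Qed.

Lemma tcover m : forall N : qtree R, (qsize N < m)%N ->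
  forall C p q k, qvalid N C p q -> Good P C p q k ->
  forall z, inP P z -> 0 < k * orient p q z -> exists pi, pop P N pi z.
Proof.
elim: m => // m IH [p' q' s r l rr] /= hsz C p q k [-> [-> [E [hl hr]]]] G z iz dz.
have G' := G; case: G' => Cp Cq pq k0 hC hz.
have E' := E; case: E' => Cs [Cr [sr [nsp [sg [hsg hE]]]]].
have CH : forall x, C x -> on_hull P x by move=> x /(hC x).1 [].
have Hp := CH _ Cp; have Hq := CH _ Cq; have Hr := CH _ Cr; have Hs := CH _ Cs.
have rq := edge_rq G E.
have sp := edge_rq (Good_swap G) (edge_ok_swap E).
have s2 := sg_sq hsg.
have cz : conv P C z by apply: hz => //; apply: ltW.
have oz : orient p q z != 0 by apply/eqP => e; move: dz; rewrite e mulr0 ltxx.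
have sz : 0 < sg * orient p q z.
  apply: sg_cases => //; apply: (conv_orient cz) => x /hE []; done.
have ez : 0 <= sg * orient s r z by apply: (conv_orient cz) => x /hE [].
have zp : z <> p by move=> e; move: oz; rewrite e orient_aa eqxx.
have zq : z <> q by move=> e; move: oz; rewrite e orient_ab eqxx.
have gpr : forall a b c : pt, C a -> C b -> C c -> a <> b -> b <> c -> a <> c ->
    orient a b c != 0.
  by move=> a b c Ca Cb Cc; apply: (gp3 gp); [exact: (CH _ Ca).1|exact: (CH _ Cb).1|exact: (CH _ Cc).1].
have sgpos : forall x, C x -> x <> p -> x <> q -> 0 < sg * orient p q x.
  move=> x Cx xp xq; apply: sg_cases => //; first by case: (hE x Cx).
  by apply: gpr => //; neqt.
have zr : z = r -> exists pi, pop P (QNode p q s r l rr) pi z.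
  move=> e0; subst z; exists [::]; apply: pop_nil => //; exact: quad_r.
have zs : z = s -> exists pi, pop P (QNode p q s r l rr) pi z.
  move=> e0; subst z; exists [::]; apply: pop_nil => //; exact: quad_s.
case: (boolP ((p != r) && (sg * orient r p z <= 0))) => [/andP [/eqP pr hA]|hA].
  case: (eqVneq (orient r p z) 0) => [ol|ol].
    case: (gp_line gp Hr.1 Hp.1 iz (fun e => pr (esym e)) ol) => e; first exact: zr.
    by case: zp.
  have hA' : sg * orient r p z < 0.
    rewrite lt_neqAle hA andbT mulf_eq0 negb_or ol andbT.
    by case: hsg => ->; rewrite ?oppr_eq0 oner_eq0.
  clear zr zs; case: l hl hsz => [tl [_ vtl]|//] hsz.
  have Gc := ChildGood gp G E pr.
  have spr : 0 < sg * orient p q r by apply: sgpos => //; neqt.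
  have pos : 0 < - orient p r q * orient p r z.
    have -> : - orient p r q * orient p r z = - ((sg * orient p q r) * (sg * orient r p z)).
      by rewrite mulrACA s2 mul1r /orient; ring.
    by rewrite oppr_gt0 pmulr_rlt0.
  have [pi hpi] : exists pi, pop P tl pi z.
    apply: (IH tl _ (cut C p r q) p r _ vtl Gc z iz pos).
    by move: hsz; rewrite ltnS; apply: leq_ltn_trans; apply: leq_addr.
  by exists (false :: pi); apply: pop_l.
case: (boolP ((q != s) && (sg * orient q s z <= 0))) => [/andP [/eqP qs hB]|hB].
  case: (eqVneq (orient q s z) 0) => [ol|ol].
    case: (gp_line gp Hq.1 Hs.1 iz qs ol) => e; first by case: zq.
    exact: zs.
  have hB' : sg * orient q s z < 0.
    rewrite lt_neqAle hB andbT mulf_eq0 negb_or ol andbT.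
    by case: hsg => ->; rewrite ?oppr_eq0 oner_eq0.
  clear zr zs; case: rr hr hsz => [tr [_ vtr]|//] hsz.
  have Gc := ChildGood gp (Good_swap G) (edge_ok_swap E) qs.
  have sps : 0 < sg * orient p q s by apply: sgpos => //; neqt.
  have pos : 0 < - orient q s p * orient q s z.
    have -> : - orient q s p * orient q s z = - ((sg * orient p q s) * (sg * orient q s z)).
      by rewrite mulrACA s2 mul1r /orient; ring.
    by rewrite oppr_gt0 pmulr_rlt0.
  have [pi hpi] : exists pi, pop P tr pi z.
    apply: (IH tr _ (cut C q s p) q s _ vtr Gc z iz pos).
    by move: hsz; rewrite ltnS; apply: leq_ltn_trans; apply: leq_addl.
  by exists (true :: pi); apply: pop_r.
rewrite negb_and negbK -ltNge in hA; rewrite negb_and negbK -ltNge in hB.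
exists [::]; apply: pop_nil => //.
case: (eqVneq p r) => [epr|npr].
  case: (eqVneq q s) => [eqs|nqs].
    move: ez; rewrite -epr -eqs (orient_swap p q) mulrN oppr_ge0; move: sz; lra.
  move: hB; rewrite (negbTE nqs) /= => hB.
  apply: quad_pqs; apply: (tri_bary hsg) => //; try exact: ltW.
    by apply: sgpos => //; move=> e; move: nqs; rewrite e eqxx.
  by move: ez; rewrite -epr.
move: hA; rewrite (negbTE npr) /= => hA.
case: (eqVneq q s) => [eqs|nqs].
  apply: quad_pqr; apply: (tri_bary hsg) => //; try exact: ltW.
    by apply: sgpos => //; move=> e; move: npr; rewrite e eqxx.
  by move: ez; rewrite -eqs.
move: hB; rewrite (negbTE nqs) /= => hB.
case: (boolP (sg * orient p s z <= 0)) => hps.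
  apply: quad_pqs; apply: (tri_bary hsg) => //; try exact: ltW.
    by apply: sgpos => //; move=> e; move: nqs; rewrite e eqxx.
  by rewrite (orient_swap p s) mulrN oppr_ge0.
rewrite -ltNge in hps.
apply: quad_psr; apply: (tri_bary hsg) => //; try exact: ltW.
apply: sg_cases => //; first by rewrite orient_cyc; case: (hE p Cp).
apply: gpr => //; try neqt; move=> e; move: npr; rewrite e eqxx; done.
Qed.


End Geo2.


Section Geo3.
Variable R : realFieldType.
Variable n : nat.
Variable P : 'I_n -> R * R.
Hypothesis gp : general_position P.
Local Notation pt := (R * R)%type.

Lemma conv_trans (C C' : pt -> Prop) z : conv P C z -> (forall x, C x -> conv P C' x) ->
  conv P C' z.
Proof.
case=> l [l0 [lC [l1 [z1 z2]]]] h.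
have [mu hmu] : exists mu : 'I_n -> 'I_n -> R, forall i, l i != 0 ->
   [/\ (forall j, 0 <= mu i j), (forall j, mu i j != 0 -> C' (P j)), \sum_j mu i j = 1,
       (P i).1 = \sum_j mu i j * (P j).1 & (P i).2 = \sum_j mu i j * (P j).2].
  have : forall i, exists m : 'I_n -> R, l i != 0 ->
   [/\ (forall j, 0 <= m j), (forall j, m j != 0 -> C' (P j)), \sum_j m j = 1,
       (P i).1 = \sum_j m j * (P j).1 & (P i).2 = \sum_j m j * (P j).2].
    move=> i; case: (boolP (l i != 0)) => li.
      have [m [m0 [mC [m1 [e1 e2]]]]] := h _ (lC i li); by exists m.
    by exists (fun _ => 0).
  by case/choice => f hf; exists f.
have key : forall (F : 'I_n -> R) (G : 'I_n -> R),
    (forall i, l i != 0 -> G i = \sum_j mu i j * F j) ->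
    \sum_i l i * G i = \sum_j (\sum_i l i * mu i j) * F j.
  move=> F G hG.
  transitivity (\sum_j \sum_i l i * mu i j * F j); last by apply: eq_bigr => j _; rewrite mulr_suml.
  rewrite exchange_big /=; apply: eq_bigr => i _.
  case: (boolP (l i != 0)) => li; last by rewrite negbK in li; rewrite (eqP li) mul0r big1 // => j _; rewrite !mul0r.
  by rewrite (hG i li) mulr_sumr; apply: eq_bigr => j _; rewrite mulrA.
exists (fun j => \sum_i l i * mu i j); split.
  move=> j; apply: sumr_ge0 => i _; case: (boolP (l i != 0)) => li.
    by apply: mulr_ge0 => //; case: (hmu i li).
  by rewrite negbK in li; rewrite (eqP li) mul0r.
split.
  move=> j hj; have : exists i, l i * mu i j != 0.
    case: (pselect (exists i, l i * mu i j != 0)) => // hne.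
    move: hj; rewrite big1 ?eqxx // => i _.
    by apply/eqP; apply: contraT => hh; case: hne; exists i.
  case=> i; rewrite mulf_eq0 negb_or => /andP [li mij].
  by case: (hmu i li) => _ hC _ _ _; apply: hC.
split.
  rewrite -l1 (eq_bigr (fun j => (\sum_i l i * mu i j) * 1)); last by move=> j _; rewrite mulr1.
  rewrite -(key (fun _ => 1) (fun _ => 1)); first by apply: eq_bigr => i _; rewrite mulr1.
  by move=> i li /=; case: (hmu i li) => _ _ s1 _ _; rewrite -[LHS]s1; apply: eq_bigr => j _; rewrite mulr1.
split.
  rewrite z1; apply: key => i li; by case: (hmu i li).
rewrite z2; apply: key => i li; by case: (hmu i li).
Qed.


Definition CS (S : {set 'I_n}) (x : pt) : Prop := exists i, i \in S /\ P i = x.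

Lemma bary_open (a b c x : pt) : in_open_triangle a b c x ->
  exists al be ga : R, [/\ 0 < al, 0 < be, 0 < ga, al + be + ga = 1 &
     x = (al * a.1 + be * b.1 + ga * c.1, al * a.2 + be * b.2 + ga * c.2)].
Proof.
move=> h.
have eT : orient b c x + orient c a x + orient a b x = orient a b c by rewrite /orient; ring.
have key : forall sg : R, sg = 1 \/ sg = -1 -> 0 < sg * orient a b x -> 0 < sg * orient b c x ->
    0 < sg * orient c a x -> exists al be ga : R, [/\ 0 < al, 0 < be, 0 < ga, al + be + ga = 1 &
     x = (al * a.1 + be * b.1 + ga * c.1, al * a.2 + be * b.2 + ga * c.2)].
  move=> sg hs h1 h2 h3.
  have s2 := sg_sq hs.
  have sT : 0 < sg * orient a b c.
    have -> : sg * orient a b c = sg * orient b c x + sg * orient c a x + sg * orient a b x.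
      by rewrite -eT; ring.
    lra.
  have T0 : orient a b c != 0 by apply/eqP => e; move: sT; rewrite e mulr0 ltxx.
  have dv : forall y, y / orient a b c = (sg * y) / (sg * orient a b c).
    by move=> y; field; rewrite T0 /=; apply/eqP => e; move: s2; rewrite e mul0r => /eqP; rewrite eq_sym oner_eq0.
  exists (orient b c x / orient a b c), (orient c a x / orient a b c), (orient a b x / orient a b c).
  split; try (rewrite dv; apply: divr_gt0 => //).
    by rewrite -!mulrDl eT divff.
  apply: pt_eq => /=; rewrite /orient; field; exact: T0.
case: h => [[h1 [h2 h3]]|[h1 [h2 h3]]].
  by apply: (key 1); [left|rewrite mul1r..].
apply: (key (-1)); [right|rewrite mulN1r oppr_gt0..] => //.
Qed.

Lemma weight_le1 (l : 'I_n -> R) y : (forall i, 0 <= l i) -> \sum_i l i = 1 -> l y <= 1.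
Proof. move=> l0 l1; rewrite -l1; exact: sum_ge_term. Qed.

Lemma weight_eq1 (l : 'I_n -> R) y (x : pt) : (forall i, 0 <= l i) -> \sum_i l i = 1 ->
  x.1 = \sum_i l i * (P i).1 -> x.2 = \sum_i l i * (P i).2 -> l y = 1 -> x = P y.
Proof.
move=> l0 l1 x1 x2 ly.
have z : forall i, i != y -> l i = 0.
  have : \sum_(i | i != y) l i = 0 by move: l1; rewrite (bigD1 y) //= ly; lra.
  by move=> h i iy; apply: (psumr_eq0P (fun i _ => l0 i) h).
apply: pt_eq; [rewrite x1|rewrite x2]; rewrite (bigD1 y) //= ly mul1r big1 ?addr0 // => i iy; by rewrite z // mul0r.
Qed.

Lemma renorm S y (k : 'I_n -> R) : (forall i, 0 <= k i) -> (forall i, k i != 0 -> CS S (P i)) ->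
  \sum_i k i = 1 -> (P y).1 = \sum_i k i * (P i).1 -> (P y).2 = \sum_i k i * (P i).2 ->
  k y < 1 -> conv P (CS (S :\ y)) (P y).
Proof.
move=> k0 kC k1 e1 e2 ky.
have d0 : 1 - k y != 0 by rewrite subr_eq0 eq_sym; apply/eqP => e; move: ky; rewrite e ltxx.
exists (fun i => if i == y then 0 else k i / (1 - k y)); split.
  move=> i; case: (i == y) => //; apply: divr_ge0 => //; lra.
split.
  move=> i; case: (eqVneq i y) => [->|iy] /=; first by rewrite eqxx.
  rewrite mulf_eq0 negb_or => /andP [ki _]; case: (kC i ki) => j [jS ej].
  have ji : j = i by apply: gp.1.
  by exists i; split => //; rewrite !inE iy -ji.
have sp : forall F : 'I_n -> R, \sum_i (if i == y then 0 else k i / (1 - k y)) * F i =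
    (\sum_i k i * F i - k y * F y) / (1 - k y).
  move=> F; rewrite (bigD1 y) //= eqxx mul0r add0r.
  rewrite [X in (X - _) / _](bigD1 y) //= addrAC subrr add0r.
  rewrite mulr_suml; apply: eq_bigr => i /negbTE ->; by rewrite mulrAC.
split.
  have := sp (fun _ => 1); rewrite /= !(eq_bigr _ (fun i _ => mulr1 _)) => ->.
  by rewrite k1 mulr1 divff.
split.
  by rewrite sp -e1; field.
by rewrite sp -e2; field.
Qed.


Lemma open_neq (a b c x : pt) : in_open_triangle a b c x -> [/\ a <> x, b <> x & c <> x].
Proof.
move=> h; split => e; subst x; case: h => [[h1 [h2 h3]]|[h1 [h2 h3]]];
  try (move: h1; rewrite ?orient_aa ?orient_ab ltxx //);
  try (move: h2; rewrite ?orient_aa ?orient_ab ltxx //);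
  try (move: h3; rewrite ?orient_aa ?orient_ab ltxx //).
Qed.

Lemma lt1_of (C : pt -> Prop) (a : pt) y : conv P C a -> a <> P y ->
  exists l : 'I_n -> R, [/\ (forall i, 0 <= l i), (forall i, l i != 0 -> C (P i)),
     \sum_i l i = 1, a.1 = \sum_i l i * (P i).1 & a.2 = \sum_i l i * (P i).2] /\ l y < 1.
Proof.
case=> l [l0 [lC [l1 [a1 a2]]]] ay; exists l; split => //.
rewrite lt_neqAle weight_le1 // andbT; apply/eqP => e; apply: ay.
exact: (weight_eq1 l0 l1 a1 a2 e).
Qed.

Lemma remove_step S y (a b c : pt) : in_open_triangle a b c (P y) ->
  (forall z, inP P z -> conv P (CS S) z) -> inP P a -> inP P b -> inP P c ->
  conv P (CS (S :\ y)) (P y).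
Proof.
move=> ht hall ia ib ic.
have [na nb nc] := open_neq ht.
have [al [be [ga [al0 be0 ga0 s1 ey]]]] := bary_open ht.
have [la [[la0 laC la1 a1 a2] lay]] := lt1_of (hall a ia) na.
have [lb [[lb0 lbC lb1 b1 b2] lby]] := lt1_of (hall b ib) nb.
have [lc [[lc0 lcC lc1 c1 c2] lcy]] := lt1_of (hall c ic) nc.
pose k := fun i => al * la i + be * lb i + ga * lc i.
apply: (renorm (k := k)).
- move=> i; rewrite /k; apply: addr_ge0; first apply: addr_ge0; apply: mulr_ge0 => //; exact: ltW.
- move=> i; rewrite /k => hk.
  case: (boolP (la i == 0)) => [/eqP ha|/laC //].
  case: (boolP (lb i == 0)) => [/eqP hb|/lbC //].
  case: (boolP (lc i == 0)) => [/eqP hc|/lcC //].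
  by move: hk; rewrite ha hb hc !mulr0 !addr0 eqxx.
- rewrite /k !big_split /= -!mulr_sumr la1 lb1 lc1 !mulr1 //.
- rewrite ey /= a1 b1 c1 !mulr_sumr -!big_split /=; apply: eq_bigr => i _; rewrite /k; ring.
- rewrite ey /= a2 b2 c2 !mulr_sumr -!big_split /=; apply: eq_bigr => i _; rewrite /k; ring.
- rewrite /k.
  have : al * la y < al * 1 by rewrite ltr_pM2l.
  have : be * lb y < be * 1 by rewrite ltr_pM2l.
  have : ga * lc y < ga * 1 by rewrite ltr_pM2l.
  lra.
Qed.

Definition Hs : {set 'I_n} := [set i | `[< on_hull P (P i) >]].

Lemma H1 : (forall i, ~ on_hull P (P i) -> exists a b c : pt,
     [/\ inP P a, inP P b, inP P c & in_open_triangle a b c (P i)]) ->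
  forall z, inP P z -> conv P (on_hull P) z.
Proof.
move=> htri.
suff : forall m S, #|S :\: Hs| = m -> Hs \subset S -> (forall z, inP P z -> conv P (CS S) z) ->
   forall z, inP P z -> conv P (CS Hs) z.
  move=> /(_ _ setT erefl (subsetT _)) h z iz.
  have : conv P (CS Hs) z.
    apply: h => // x [i <-]; apply: conv_pt; exists i; split => //; exact: in_setT.
  apply: conv_mono => x [i [iH <-]]; move: iH; rewrite inE; by move/asboolP.
elim=> [|m IH] S hm hsub hall.
  suff eS : S = Hs by rewrite -eS.
  apply/eqP; rewrite eqEsubset hsub andbT; apply/subsetP => i iS.
  apply: contraT => niH.
  by move: hm => /eqP; rewrite cards_eq0 => /eqP /setP /(_ i); rewrite in_setD niH iS in_set0.
have [y yD] : exists y, y \in S :\: Hs.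
  by apply/set0Pn; rewrite -card_gt0 hm.
move: (yD); rewrite inE => /andP [yH yS].
apply: (IH (S :\ y)).
- have e : (S :\ y) :\: Hs = (S :\: Hs) :\ y.
    by apply/setP => i; rewrite !inE andbCA.
  rewrite e; move: (cardsD1 y (S :\: Hs)); rewrite yD hm add1n; by case.
- apply/subsetP => i iH; rewrite !inE (subsetP hsub i iH) andbT.
  by apply/eqP => e; move: yH; rewrite -e iH.
- have hy : conv P (CS (S :\ y)) (P y).
    have nh : ~ on_hull P (P y) by move=> h; move: yH; rewrite inE; case/negP; apply/asboolP.
    have [a [b [c [ia ib ic ht]]]] := htri y nh.
    exact: (remove_step ht hall ia ib ic).
  move=> z iz; apply: (conv_trans (hall z iz)) => x [i [iS <-]].
  case: (eqVneq i y) => [->//|iy].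
  by apply: conv_pt; exists i; split => //; rewrite !inE iy.
Qed.

End Geo3.


Section Geo4.
Variable R : realFieldType.
Variable n : nat.
Variable P : 'I_n -> R * R.
Hypothesis gp : general_position P.
Local Notation pt := (R * R)%type.

Lemma subtree_cat (t : qtree R) pi1 pi2 N :
  subtree t pi1 = Some N -> subtree t (pi1 ++ pi2) = subtree N pi2.
Proof.
elim: pi1 t => [|b pi1 IH] [p q s r l rr] /=; first by case=> <-.
by case: (if b then rr else l) => // t'; apply: IH.
Qed.

Lemma tree_inv pi : forall (t : qtree R) C p q k, qvalid t C p q -> Good P C p q k ->
  forall N, subtree t pi = Some N -> exists C' k', qvalid N C' (let: QNode p' _ _ _ _ _ := N in p')
     (let: QNode _ q' _ _ _ _ := N in q') /\
     Good P C' (let: QNode p' _ _ _ _ _ := N in p') (let: QNode _ q' _ _ _ _ := N in q') k'.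
Proof.
elim: pi => [|b pi IH] [p0 q0 s r l rr] C p q k hv G N /=.
  case=> <-; move: (hv) => /= [e1 [e2 _]]; subst p0 q0; by exists C, k.
move: hv => /= [e1 [e2 [E [hl hr]]]]; subst p0 q0.
case: b.
  case: rr hr => [tr [qs vtr]|//] /= hs.
  exact: (IH tr _ _ _ _ vtr (ChildGood gp (Good_swap G) (edge_ok_swap E) qs) N hs).
case: l hl => [tl [pr vtl]|//] /= hs.
exact: (IH tl _ _ _ _ vtl (ChildGood gp G E pr) N hs).
Qed.

Lemma tri_up (a b c x p q : pt) k : in_open_triangle a b c x -> k != 0 -> p <> q ->
  k * orient p q x < k * orient p q a \/ k * orient p q x < k * orient p q b \/
  k * orient p q x < k * orient p q c.
Proof.
move=> ht k0 pq.
have [al [be [ga [al0 be0 ga0 s1 ex]]]] := bary_open ht.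
pose d := fun v => k * orient p q v.
have dx : d x = al * d a + be * d b + ga * d c.
  rewrite /d ex /orient /=; have -> : ga = 1 - al - be by lra. ring.
case: (boolP (d x < d a)) => ha; first by left.
case: (boolP (d x < d b)) => hb; first by right; left.
case: (boolP (d x < d c)) => hc; first by right; right.
rewrite -!leNgt in ha hb hc.
exfalso.
have ea : d a = d x.
  apply/eqP; rewrite eq_le ha /=; apply: contraT; rewrite -ltNge => h.
  have : al * d a < al * d x by rewrite ltr_pM2l.
  have : be * d b <= be * d x by rewrite ler_pM2l.
  have : ga * d c <= ga * d x by rewrite ler_pM2l.
  move: dx; have -> : ga = 1 - al - be by lra. move=> dx h1 h2 h3.
  have : d x = al * d x + be * d x + (1 - al - be) * d x by ring.
  lra.
have eb : d b = d x.
  apply/eqP; rewrite eq_le hb /=; apply: contraT; rewrite -ltNge => h.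
  have : al * d a <= al * d x by rewrite ler_pM2l.
  have : be * d b < be * d x by rewrite ltr_pM2l.
  have : ga * d c <= ga * d x by rewrite ler_pM2l.
  move: dx; have -> : ga = 1 - al - be by lra. move=> dx h1 h2 h3.
  have : d x = al * d x + be * d x + (1 - al - be) * d x by ring.
  lra.
have oa : orient p q a = orient p q x.
  by move/eqP: ea; rewrite /d -subr_eq0 -mulrBr mulf_eq0 (negbTE k0) subr_eq0 => /eqP.
have ob : orient p q b = orient p q x.
  by move/eqP: eb; rewrite /d -subr_eq0 -mulrBr mulf_eq0 (negbTE k0) subr_eq0 => /eqP.
have uv : (- (q.2 - p.2), q.1 - p.1) != (0, 0).
  rewrite xpair_eqE negb_and oppr_eq0 orbC; exact: neq_pt.
have : orient a b x = 0.
  apply: (line_of_level uv).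
    by move: ob oa; rewrite /orient => e1 e2; lra.
  by move: oa; rewrite /orient => e2; lra.
case: ht => [[h1 _]|[h1 _]] e; by move: h1; rewrite e ltxx.
Qed.

End Geo4.

From mathcomp Require Import zify.


Definition codef (a : nat) (b : bool) : nat := (a.*2 + b)%N.
Definition code (pi : seq bool) : nat := foldl codef 1%N pi.

Lemma foldl_ge (pi : seq bool) a : (a <= foldl codef a pi)%N.
Proof.
elim: pi a => //= b pi IH a; apply: leq_trans (IH _); rewrite /codef -addnn -addnA leq_addr //.
Qed.

Lemma foldl_gt (pi : seq bool) a : (0 < a)%N -> pi != [::] -> (a < foldl codef a pi)%N.
Proof.
case: pi => //= b pi a0 _; apply: leq_trans (foldl_ge _ _); rewrite /codef -addnn -addnA.
by rewrite -addn1 leq_add2l (leq_trans a0) // leq_addr.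
Qed.

Lemma code_pos pi : (0 < code pi)%N.
Proof. exact: leq_trans (foldl_ge _ _). Qed.

Lemma code_cat pi pi' : code (pi ++ pi') = foldl codef (code pi) pi'.
Proof. by rewrite /code foldl_cat. Qed.

Lemma code_rcons pi b : code (rcons pi b) = ((code pi).*2 + b)%N.
Proof. by rewrite -cats1 code_cat. Qed.

Lemma code_inj : injective code.
Proof.
move=> pi1; elim/last_ind: pi1 => [|pi1 b1 IH] pi2; case/lastP: pi2 => [|pi2 b2] //.
- rewrite code_rcons => e; have := code_pos pi2; move: e; rewrite /code /= -muln2; lia.
- rewrite code_rcons => e; have := code_pos pi1; move: e; rewrite /code /= -muln2; lia.
rewrite !code_rcons => e.
have eb : b1 = b2.
  by move: e => /(congr1 odd); rewrite !oddD !odd_double /=; case: b1; case: b2.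
subst b2; move/eqP: e; rewrite eqn_add2r -!muln2 eqn_mul2r /= => /eqP e.
by rewrite (IH _ e).
Qed.

Section Mu.
Variable R : realFieldType.
Variable n : nat.
Variable P : 'I_n -> R * R.
Variable t : qtree R.
Local Notation pt := (R * R)%type.

Fixpoint paths (u : qtree R) : seq (seq bool) :=
  match u with
  | QNode _ _ _ _ l rr =>
      [::] :: (map (cons false) (if l is Some tl then paths tl else [::])) ++
              (map (cons true) (if rr is Some tr then paths tr else [::]))
  end.

Lemma subtree_paths pi : forall (u : qtree R) N, subtree u pi = Some N -> pi \in paths u.
Proof.
elim: pi => [|b pi IH] [p q s r l rr] N //=.
case: b => /=.
  case: rr => // tr /IH h; rewrite inE mem_cat; apply/orP; right; apply/orP; right.
  by rewrite mem_map // => x y [].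
case: l => // tl /IH h; rewrite inE mem_cat; apply/orP; right; apply/orP; left.
by rewrite mem_map // => x y [].
Qed.

Definition popb (pi : seq bool) (z : pt) : bool := `[< pop P t pi z >].

Definition mu1 (z : pt) : nat := \max_(pi <- paths t | popb pi z) code pi.

Definition pathof (z : pt) : seq bool :=
  nth [::] (paths t) (find (fun pi => popb pi z && (code pi == mu1 z)) (paths t)).

Definition dep (z : pt) : R :=
  match subtree t (pathof z) with
  | Some (QNode p q _ _ _ _) => `|orient p q z|
  | None => 0
  end.

Definition mult (x y : pt) : Prop := (mu1 x < mu1 y)%N \/ (mu1 x = mu1 y /\ dep x < dep y).

Lemma mu1_ge pi z : pop P t pi z -> (code pi <= mu1 z)%N.
Proof.
move=> h; have [p [q [s [r [l [rr [hs _]]]]]]] := h.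
apply: (leq_bigmax_seq (F := code)); first exact: subtree_paths hs.
by apply/asboolP.
Qed.

Lemma max_attained (s : seq (seq bool)) (Q : pred (seq bool)) :
  (0 < \max_(pi <- s | Q pi) code pi)%N ->
  exists pi, [/\ pi \in s, Q pi & code pi = \max_(pi <- s | Q pi) code pi].
Proof.
elim: s => [|x s IH]; first by rewrite big_nil.
rewrite big_cons; case: ifP => Qx.
  case: (leqP (\max_(pi <- s | Q pi) code pi) (code x)) => h.
    by move=> _; exists x; rewrite in_cons eqxx.
  move=> _; have [pi [pin Qpi e]] := IH (leq_ltn_trans (leq0n _) h).
  by exists pi; rewrite in_cons pin orbT.
move=> /IH [pi [pin Qpi e]]; by exists pi; rewrite in_cons pin orbT.
Qed.

Lemma mu1_attained z : (exists pi, pop P t pi z) ->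
  exists pi, pop P t pi z /\ code pi = mu1 z.
Proof.
case=> pi0 h0.
have : (0 < mu1 z)%N by apply: leq_trans (mu1_ge h0); exact: code_pos.
move=> /max_attained [pi [_ Qpi e]]; exists pi; split => //; exact/asboolP.
Qed.

Lemma pathof_spec z : (exists pi, pop P t pi z) ->
  pop P t (pathof z) z /\ code (pathof z) = mu1 z.
Proof.
case=> pi0 h0.
have : (0 < mu1 z)%N by apply: leq_trans (mu1_ge h0); exact: code_pos.
move=> /max_attained [pi [pin Qpi e]].
have hh : has (fun pi => popb pi z && (code pi == mu1 z)) (paths t).
  by apply/hasP; exists pi => //; rewrite Qpi e eqxx.
have := nth_find [::] hh; rewrite -/(pathof z) => /andP [h1 /eqP h2].
by split => //; apply/asboolP.
Qed.

Lemma mult_trans x y z : mult x y -> mult y z -> mult x z.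
Proof.
case=> [h1|[e1 h1]] [h2|[e2 h2]]; rewrite /mult.
- by left; apply: ltn_trans h2.
- by left; rewrite -e2.
- by left; rewrite e1.
- by right; split; [rewrite e1|apply: lt_trans h2].
Qed.

Lemma mult_irr x : ~ mult x x.
Proof. by case=> [|[_]]; rewrite ?ltnn ?ltxx. Qed.

Lemma mult_step x pi' y : (exists pi, pop P t pi x) ->
  pop P t (pathof x ++ pi') y -> (pi' = [::] -> deeper t (pathof x) x y) -> mult x y.
Proof.
move=> hx hy hd.
have [hpx cx] := pathof_spec hx.
have my := mu1_ge hy.
case: (eqVneq pi' [::]) => [e|ne].
  subst pi'; rewrite cats0 in hy my.
  case: (ltngtP (mu1 x) (mu1 y)) => h; first by left.
    by move: my; rewrite cx leqNgt h.
  right; split => //.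
  have [hpy cy] := pathof_spec (ex_intro (fun pi => pop P t pi y) _ hy).
  have ep : pathof y = pathof x by apply: code_inj; rewrite cy cx.
  case: (hd erefl) => p [q [s [r [l [rr [hs hlt]]]]]].
  by rewrite /dep ep hs.
left; rewrite -cx; apply: leq_trans my; rewrite code_cat; apply: foldl_gt => //; exact: code_pos.
Qed.


End Mu.


Section Geo5.
Variable R : realFieldType.
Variable n : nat.
Variable P : 'I_n -> R * R.
Hypothesis gp : general_position P.
Local Notation pt := (R * R)%type.

Lemma quad_d (p q s r x : pt) k : in_quad p q s r x ->
  0 <= k * orient p q s -> 0 <= k * orient p q r -> 0 <= k * orient p q x.
Proof.
case=> a [b [c [d [a0 [b0 [c0 [d0 [s1 ->]]]]]]]] hs hr.
have -> : k * orient p q (a * p.1 + b * q.1 + c * s.1 + d * r.1, a * p.2 + b * q.2 + c * s.2 + d * r.2)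
   = c * (k * orient p q s) + d * (k * orient p q r).
  have -> : a = 1 - b - c - d by lra.
  rewrite /orient /=; ring.
by apply: addr_ge0; apply: mulr_ge0.
Qed.

Lemma step_exists (t : qtree R) C0 p0 q0 k0 : qvalid t C0 p0 q0 -> Good P C0 p0 q0 k0 ->
  forall pi (x a b c : pt), pop P t pi x -> in_open_triangle a b c x ->
  inP P a -> inP P b -> inP P c ->
  exists y, (y = a \/ y = b \/ y = c) /\
    exists pi', pop P t (pi ++ pi') y /\ (pi' = [::] -> deeper t pi x y).
Proof.
move=> hv G pi x a b c [p [q [s [r [l [rr [hs [ix [hq ox]]]]]]]]] ht ia ib ic.
have [C [k [/= hvN GN]]] := tree_inv gp hv G hs.
have hvN' := hvN; move: hvN' => /= [_ [_ [E _]]].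
case: (E) => Cs [Cr _].
have GN' := GN; case: GN' => Cp Cq pq k0' hC hz.
have dx0 := quad_d hq ((hC s).1 Cs).2 ((hC r).1 Cr).2.
have dx : 0 < k * orient p q x.
  by rewrite lt_def dx0 andbT mulf_eq0 negb_or k0'.
have fin : forall y, inP P y -> k * orient p q x < k * orient p q y ->
    exists pi', pop P t (pi ++ pi') y /\ (pi' = [::] -> deeper t pi x y).
  move=> y iy hxy.
  have dy : 0 < k * orient p q y by apply: lt_trans hxy.
  have [pi' hp] := tcover gp (ltnSn (qsize (QNode p q s r l rr))) hvN GN iy dy.
  exists pi'; split; first by rewrite /pop (subtree_cat _ hs).
  move=> _; exists p, q, s, r, l, rr; split => //.
  have : `|k * orient p q x| < `|k * orient p q y| by rewrite !gtr0_norm.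
  by rewrite !normrM ltr_pM2l // normr_gt0.
case: (tri_up ht k0' pq) => [h|[h|h]].
- by exists a; split; [left|apply: fin].
- by exists b; split; [right; left|apply: fin].
- by exists c; split; [right; right|apply: fin].
Qed.


End Geo5.


Section Count.
Variable R : realFieldType.
Variable n : nat.
Variable P : 'I_n -> R * R.
Hypothesis gp : general_position P.
Variable t : qtree R.
Variable W : 'I_n -> int * int * int.
Local Notation pt := (R * R)%type.

Definition l0 : 'I_3 := @Ordinal 3 0 isT.
Definition l1 : 'I_3 := @Ordinal 3 1 isT.
Definition l2 : 'I_3 := @Ordinal 3 2 isT.

Definition comp (l : 'I_3) (w : int * int * int) : int :=
  if val l == 0%N then w.1.1 else if val l == 1%N then w.1.2 else w.2.

Definition triW (l : 'I_3) (j : 'I_n) : 'I_n := insubd j (absz (comp l (W j))).-1.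

Definition pos (sig : {perm 'I_n}) : {perm 'I_n} := (sig^-1)%g.

Definition intr (x : 'I_n) : bool := ~~ `[< on_hull P (P x) >].

Definition Lgood (sig : {perm 'I_n}) (x : 'I_n) (l : 'I_3) : Prop :=
  qprec P t (P x) (P (sig (triW l (pos sig x)))) /\ mult P t (P x) (P (sig (triW l (pos sig x)))).

Definition labf (sig : {perm 'I_n}) (j : 'I_n) : 'I_3 :=
  odflt l0 [pick l : 'I_3 | `[< Lgood sig (sig j) l >] ].

Definition phif (sig : {perm 'I_n}) (x : 'I_n) : 'I_n :=
  if intr x then sig (triW (labf sig (pos sig x)) (pos sig x)) else x.

Definition rhof (sig : {perm 'I_n}) (xy : 'I_n * 'I_n) : bool :=
  [&& intr xy.1, intr xy.2, phif sig xy.1 == phif sig xy.2 & (pos sig xy.1 <= pos sig xy.2)%N].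

Definition Hset : {set 'I_n} := [set i | `[< on_hull P (P i) >]].

Definition hpf (sig : {perm 'I_n}) (e : 'I_(hull_count P)) : 'I_n :=
  pos sig (@enum_val _ (mem Hset) e).

Definition encode (sig : {perm 'I_n}) :
  ({ffun 'I_n -> 'I_n} * {ffun 'I_n * 'I_n -> bool}) *
  ({ffun 'I_n -> 'I_3} * {ffun 'I_(hull_count P) -> 'I_n}) :=
  ((finfun (phif sig), finfun (rhof sig)), (finfun (labf sig), finfun (hpf sig))).

Lemma posK (sig : {perm 'I_n}) (x : 'I_n) : sig (pos sig x) = x.
Proof. exact: permKV. Qed.
Lemma posKV (sig : {perm 'I_n}) (j : 'I_n) : pos sig (sig j) = j.
Proof. exact: permK. Qed.

Lemma wit_hull (sig : {perm 'I_n}) (j : 'I_n) : is_witness P W sig -> on_hull P (P (sig j)) -> W j = (-1, -1, -1)%R.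
Proof. by move=> h; case: (h j). Qed.

Lemma wit_int (sig : {perm 'I_n}) (j : 'I_n) : is_witness P W sig -> ~ on_hull P (P (sig j)) -> W j != (-1, -1, -1)%R.
Proof.
move=> h nh; case: (h j) => _ /(_ nh) [ia [ib [ic [-> _]]]]; by [].
Qed.

Lemma triW_spec (sig : {perm 'I_n}) (j : 'I_n) : is_witness P W sig -> ~ on_hull P (P (sig j)) ->
  in_open_triangle (P (sig (triW l0 j))) (P (sig (triW l1 j))) (P (sig (triW l2 j))) (P (sig j)).
Proof.
move=> h nh; case: (h j) => _ /(_ nh) [ia [ib [ic [ew ht]]]].
have e : forall (l : 'I_3) (k : 'I_n), absz (comp l (W j)) = k.+1 -> triW l j = k.
  move=> l k hk; apply: val_inj; rewrite /triW hk /= insubdK //; exact: ltn_ord.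
by rewrite (e l0 ia) ?(e l1 ib) ?(e l2 ic) // /comp ew.
Qed.


Variables (p0 q0 : pt) (k0 : R).
Hypothesis hv0 : qvalid t (on_hull P) p0 q0.
Hypothesis G0 : Good P (on_hull P) p0 q0 k0.
Hypothesis hall0 : forall i, 0 <= k0 * orient p0 q0 (P i).

Lemma int_pop x : intr x -> exists pi, pop P t pi (P x).
Proof.
move=> hx; have nh : ~ on_hull P (P x) by move=> h; move: hx; rewrite /intr; case: asboolP.
case: G0 => Cp Cq pq kk _ _.
have ox : orient p0 q0 (P x) != 0.
  apply/eqP => e; case: (gp_line gp Cp.1 Cq.1 (ex_intro _ x erefl) pq e) => e'; apply: nh; by rewrite e'.
apply: (tcover gp (ltnSn (qsize t)) hv0 G0 (ex_intro _ x erefl)).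
by rewrite lt_def hall0 andbT mulf_eq0 negb_or kk.
Qed.

Lemma lab_exists (sig : {perm 'I_n}) x : is_witness P W sig -> intr x -> exists l, Lgood sig x l.
Proof.
move=> hw hx.
have nh : ~ on_hull P (P (sig (pos sig x))).
  by rewrite posK => h; move: hx; rewrite /intr; case: asboolP.
have ht := triW_spec hw nh; rewrite posK in ht.
have [hpx cx] := pathof_spec (int_pop hx).
have iv : forall l, inP P (P (sig (triW l (pos sig x)))) by move=> l; eexists.
have [y [hy [pi' [hpy hd]]]] := step_exists gp hv0 G0 hpx ht (iv l0) (iv l1) (iv l2).
have hm := mult_step (int_pop hx) hpy hd.
have hq : qprec P t (P x) y.
  exists (pathof P t (P x)), (pathof P t (P x) ++ pi'); split => //; split => //.
  case: (eqVneq pi' [::]) => [e|ne].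
    by right; subst pi'; rewrite cats0; split => //; apply: hd.
  left; split; first exact: prefix_prefix.
  move=> e; have : size (pathof P t (P x)) = size (pathof P t (P x) ++ pi') by rewrite -e.
  by rewrite size_cat -{1}(addn0 (size _)) => /eqP; rewrite eqn_add2l eq_sym size_eq0 (negbTE ne).
case: hy => [ey|[ey|ey]]; subst y; [exists l0|exists l1|exists l2]; by split.
Qed.

Lemma lab_good (sig : {perm 'I_n}) x : is_witness P W sig -> intr x ->
  Lgood sig x (labf sig (pos sig x)).
Proof.
move=> hw hx; rewrite /labf posK; case: pickP => [l /asboolP //|none].
have [l hl] := lab_exists hw hx.
by move: (none l) => /asboolP.
Qed.


Lemma intrP x : intr x <-> ~ on_hull P (P x).
Proof.
rewrite /intr; split => [/negP h hh|h]; first by apply: h; apply/asboolP.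
by apply/negP => /asboolP.
Qed.

Lemma nintrP x : ~~ intr x <-> on_hull P (P x).
Proof. by rewrite /intr negbK; split => /asboolP. Qed.

Lemma encode_OD (sig : {perm 'I_n}) : is_witness P W sig -> ord_downdraft P t (encode sig).1.
Proof.
move=> hw; rewrite /ord_downdraft /encode /=.
have ti : forall i, ~ on_hull P (P i) -> intr i = true by move=> i /intrP.
split.
  move=> i hi; rewrite ffunE /phif (ti i hi); exact: (lab_good hw (ti i hi)).1.
split.
  move=> i hi; rewrite ffunE /phif.
  case: (boolP (intr i)) => // /intrP h; by case: hi.
split.
  move=> i j; rewrite ffunE /rhof /= => /and4P [hi hj /eqP he _].
  by split; [apply/intrP|split; [apply/intrP|rewrite !ffunE]].
move=> i j k hi hj hk e1 e2; rewrite !ffunE /rhof /= (ti i hi) (ti j hj) (ti k hk) /=.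
move: e1 e2; rewrite !ffunE => e1 e2.
rewrite e1 e2 !eqxx /=; split.
- by rewrite leqnn.
- move=> h1 h2; apply: (@perm_inj _ (pos sig)); apply: val_inj; apply/eqP.
  by rewrite eqn_leq h1 h2.
- exact: leq_trans.
- by case: (leqP (pos sig i) (pos sig j)) => h; [left|right; apply: ltnW].
Qed.


Lemma phi_pos (sig : {perm 'I_n}) x : intr x ->
  pos sig (phif sig x) = triW (labf sig (pos sig x)) (pos sig x).
Proof. by move=> hx; rewrite /phif hx posKV. Qed.

Lemma intr_W (sig : {perm 'I_n}) j : is_witness P W sig ->
  intr (sig j) = (W j != (-1, -1, -1)%R).
Proof.
move=> hw; case: (boolP (intr (sig j))) => h.
  by rewrite (wit_int hw (proj1 (intrP _) h)).
by rewrite (wit_hull hw (proj1 (nintrP _) h)) eqxx.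
Qed.

Lemma fiber (sA sB : {perm 'I_n}) : is_witness P W sA -> is_witness P W sB ->
  (forall x, phif sA x = phif sB x) -> (forall xy, rhof sA xy = rhof sB xy) ->
  (forall j, labf sA j = labf sB j) ->
  forall y, pos sA y = pos sB y ->
  forall m x, (pos sB x < m)%N -> intr x -> phif sA x = y -> ~ (pos sA x < pos sB x)%N.
Proof.
move=> wA wB ephi erho elab y ey; elim=> // m IH x hm hx hphi hlt.
set i := pos sA x.
set x2 := sB i.
have Wi : W i != (-1, -1, -1)%R by rewrite -(intr_W i wA) posK.
have hx2 : intr x2 by rewrite /x2 (intr_W i wB).
have p2 : pos sB x2 = i by rewrite posKV.
have phx2 : phif sB x2 = y.
  rewrite /phif hx2 p2 -elab.
  have := phi_pos sA hx; rewrite hphi -/i => <-.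
  by rewrite ey posK.
have rB : rhof sB (x2, x) by rewrite /rhof /= hx2 hx /= phx2 -ephi hphi eqxx p2 ltnW.
move: rB; rewrite -erho /rhof /= => /and4P [_ _ _ hle].
have nx : x2 != x.
  by apply/eqP => e; move: hlt; rewrite -/i -p2 e ltnn.
have hlt2 : (pos sA x2 < pos sA x)%N.
  rewrite ltn_neqAle hle andbT; apply: contra nx => /eqP e.
  apply/eqP; apply: (@perm_inj _ (pos sA)); exact: val_inj.
apply: (IH x2); rewrite ?p2 //.
  by move: hm; rewrite ltnS; apply: leq_trans.
by rewrite ephi phx2.
Qed.


Definition rank (x : 'I_n) : nat := #|[set z | `[< mult P t (P x) (P z) >] ]|.

Lemma rank_lt x y : mult P t (P x) (P y) -> (rank y < rank x)%N.
Proof.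
move=> hxy; apply: proper_card; rewrite properE; apply/andP; split.
  apply/subsetP => z; rewrite !inE => /asboolP h; apply/asboolP; exact: mult_trans hxy h.
apply/subsetPn; exists y; rewrite !inE; first by apply/asboolP.
by apply/asboolP; apply: mult_irr.
Qed.

Lemma encode_inj (s1 s2 : {perm 'I_n}) : is_witness P W s1 -> is_witness P W s2 ->
  encode s1 = encode s2 -> s1 = s2.
Proof.
move=> w1 w2 e.
have ephi : forall x, phif s1 x = phif s2 x.
  by move=> x; have /ffunP /(_ x) := congr1 (fun d => d.1.1) e; rewrite /= !ffunE.
have erho : forall xy, rhof s1 xy = rhof s2 xy.
  by move=> x; have /ffunP /(_ x) := congr1 (fun d => d.1.2) e; rewrite /= !ffunE.
have elab : forall j, labf s1 j = labf s2 j.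
  by move=> x; have /ffunP /(_ x) := congr1 (fun d => d.2.1) e; rewrite /= !ffunE.
have ehp : forall j, hpf s1 j = hpf s2 j.
  by move=> x; have /ffunP /(_ x) := congr1 (fun d => d.2.2) e; rewrite /= !ffunE.
suff hpos : forall m x, (rank x < m)%N -> pos s1 x = pos s2 x.
  apply/permP => j; have := hpos (rank (s1 j)).+1 (s1 j) (ltnSn _).
  by rewrite posKV => ej; rewrite {2}ej posK.
elim=> // m IH x hm.
case: (boolP (intr x)) => hx; last first.
  have xH : x \in Hset by rewrite inE; apply/asboolP; apply/nintrP.
  have := ehp (enum_rank_in xH x); rewrite /hpf (enum_rankK_in xH xH) //.
set y := phif s1 x.
have hmul : mult P t (P x) (P y) by rewrite /y /phif hx; exact: (lab_good w1 hx).2.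
have ey : pos s1 y = pos s2 y.
  apply: IH; apply: leq_trans (rank_lt hmul) _; by rewrite -ltnS.
have h12 := fiber w1 w2 ephi erho elab ey (ltnSn (pos s2 x)) hx erefl.
have ephi' : forall x, phif s2 x = phif s1 x by move=> z; rewrite ephi.
have erho' : forall xy, rhof s2 xy = rhof s1 xy by move=> z; rewrite erho.
have elab' : forall j, labf s2 j = labf s1 j by move=> z; rewrite elab.
have h21 := fiber w2 w1 ephi' erho' elab' (esym ey) (ltnSn (pos s1 x)) hx (esym (ephi x)).
apply: val_inj; apply/eqP; rewrite eqn_leq; apply/andP; split; rewrite leqNgt; apply/negP => h; [exact: h21 h | exact: h12 h].
Qed.

End Count.

Unset Implicit Arguments.
Local Close Scope ring_scope.

Theorem corollary5p4 (R : realFieldType) (n : nat) (P : 'I_n -> R * R)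
    (t : qtree R) :
  general_position P -> qtree_for P t ->
  forall W : 'I_n -> int * int * int,
    (Vcard P W <= ODcard P t * 3 ^ n * n ^ hull_count P)%N.
Proof.
move=> gp [p0 [q0 [he hv]]] W.
case: (posnP (Vcard P W)) => [->//|Vpos].
have [sig0 hs0] : exists sig0, is_witness P W sig0.
  move: Vpos; rewrite /Vcard => /card_gt0P [s]; rewrite inE => /asboolP h; by exists s.
have htri : forall i, ~ on_hull P (P i) -> exists a b c : R * R,
    [/\ inP P a, inP P b, inP P c & in_open_triangle a b c (P i)].
  move=> i nh.
  have nh' : ~ on_hull P (P (sig0 (pos sig0 i))) by rewrite posK.
  have := triW_spec hs0 nh'; rewrite posK => ht.
  by eexists; eexists; eexists; split; [eexists|eexists|eexists|exact: ht].
have [Hp [Hq [pq [sg [hsg hall]]]]] := he.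
have G0 : Good P (on_hull P) p0 q0 sg.
  constructor => //.
  - by case: hsg => ->; rewrite ?oppr_eq0 oner_eq0.
  - move=> x; split; last by case.
    by move=> h; split => //; case: h => [[i <-] _]; apply: hall.
  - by move=> z iz _; exact: (H1 gp htri iz).
rewrite /Vcard /ODcard.
set V := [set sig | `[< is_witness P W sig >] ].
have inj : {in V &, injective (encode P t W)}.
  move=> s1 s2; rewrite !inE => /asboolP w1 /asboolP w2.
  exact: (encode_inj gp hv G0 hall w1 w2).
rewrite -(card_in_imset inj).
set OD := [set d | `[< ord_downdraft P t d >] ].
apply: leq_trans (subset_leq_card (_ : _ \subset setX OD setT)) _.
  apply/subsetP => _ /imsetP [s sV ->]; rewrite in_setX in_setT andbT inE.
  apply/asboolP; apply: (encode_OD gp hv G0 hall); by move: sV; rewrite inE => /asboolP.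
by rewrite cardsX cardsT card_prod !card_ffun !card_ord mulnA.
Qed.
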